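(* Let $N\ge2$ and consider the function $$D(p)=2\log N+\frac1N\sum_{k=1}^N(\log p_k)^2-\frac1{N^2}\Big(\sum_{k=1}^N\log p_k\Big)^2+\frac2N\sum_{k=1}^N\log p_k$$ on the open simplex $\{p=(p_1,\dots,p_N): p_k>0,\ \sum_k p_k=1\}$. If $p$ is a point of local extremum of $D$ on this set, then either $p=(1/N,\dots,1/N)$ or the coordinates of $p$ take exactly two distinct values.
   Context: For a probability vector $p$ with all $p_k>0$, $D(p)$ equals $\lim_{\alpha\to0+}\frac{\partial^2}{\partial\alpha^2}\mathcal H_\alpha(p)$, where $\mathcal H_\alpha(p)=\frac{1}{1-\alpha}\log\sum_{k=1}^N p_k^\alpha$ is the Rényi entropy; the paper denotes it $\mathcal H''_0(p)$. Logarithms are natural. *)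

(* Defs.v *)
From mathcomp Require Import all_boot all_order all_algebra.
From mathcomp Require Import reals exp.
Set Implicit Arguments. Unset Strict Implicit. Unset Printing Implicit Defensive.
Import Order.TTheory GRing.Theory Num.Theory.
Local Open Scope ring_scope.

Definition open_simplex (R : realType) (N : nat) (p : 'I_N -> R) : Prop :=
  (forall k, 0 < p k) /\ \sum_(k < N) p k = 1.

Definition Dfun (R : realType) (N : nat) (p : 'I_N -> R) : R :=
  2 * ln (N%:R) + (N%:R)^-1 * \sum_(k < N) (ln (p k)) ^+ 2
  - (N%:R ^+ 2)^-1 * (\sum_(k < N) ln (p k)) ^+ 2
  + 2 / N%:R * \sum_(k < N) ln (p k).

(* p is a local maximum / minimum of f on the set S (neighbourhoods taken in
   the sup-norm, which induces the standard topology of R^N) *)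
Definition local_max_on (R : realType) (N : nat) (S : ('I_N -> R) -> Prop)
  (f : ('I_N -> R) -> R) (p : 'I_N -> R) : Prop :=
  S p /\ exists eps : R, 0 < eps /\
    forall q, S q -> (forall k, `|q k - p k| < eps) -> f q <= f p.

Definition local_min_on (R : realType) (N : nat) (S : ('I_N -> R) -> Prop)
  (f : ('I_N -> R) -> R) (p : 'I_N -> R) : Prop :=
  S p /\ exists eps : R, 0 < eps /\
    forall q, S q -> (forall k, `|q k - p k| < eps) -> f p <= f q.

Definition local_extremum_on (R : realType) (N : nat) (S : ('I_N -> R) -> Prop)
  (f : ('I_N -> R) -> R) (p : 'I_N -> R) : Prop :=
  local_max_on S f p \/ local_min_on S f p.

(* Main.v *)
Require Import Defs.
From mathcomp Require Import all_boot all_order all_algebra.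
From mathcomp Require Import reals exp.
From mathcomp Require Import boolp classical_sets functions topology normedtype sequences derive realfun interval_inference.
From mathcomp Require Import ring lra.
Import Order.TTheory GRing.Theory Num.Theory.
Import numFieldNormedType.Exports.
Local Open Scope ring_scope.
Section S.
Variable R : realType.
Lemma aff (a b t : R) : is_derive t 1 (fun s => a + s * b) b.
Proof.
have h := is_deriveD (is_derive_cst a t 1) (is_deriveM (is_derive_id t 1) (is_derive_cst b t 1)).
rewrite scaler0 add0r add0r /= in h.
by apply: is_derive_eq; last by rewrite /cst; apply: mulr1.
Qed.
Lemma lnaff (a b t : R) : 0 < a + t * b -> is_derive t 1 (fun s => ln (a + s * b)) (b / (a + t*b)).
Proof.
move=> h. rewrite mulrC.
have H := @is_derive1_comp R (@ln R) (fun s => a + s * b) t _ _ (is_derive1_ln h) (aff a b t).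
exact: H.
Qed.
Variables (N : nat) (p c : 'I_N -> R).
Definition Sf (s : R) := \sum_(k < N) ln (p k + s * c k).
Definition Qf (s : R) := \sum_(k < N) (ln (p k + s * c k))^+2.
Definition dSf (t : R) := \sum_(k < N) c k / (p k + t * c k).
Definition dQf (t : R) := \sum_(k < N) 2 * ln (p k + t * c k) * (c k / (p k + t * c k)).
Lemma derS t : (forall k, 0 < p k + t * c k) -> is_derive t 1 Sf (dSf t).
Proof.
move=> hp.
have := @is_derive_sum _ _ _ N (fun k (s : R) => ln (p k + s * c k)) t 1 _ (fun k => lnaff _ _ _ (hp k)).
by rewrite fct_sumE.
Qed.
Lemma derQ t : (forall k, 0 < p k + t * c k) -> is_derive t 1 Qf (dQf t).
Proof.
move=> hp.
have := @is_derive_sum _ _ _ N (fun k (s : R) => (ln (p k + s * c k))^+2) t 1 _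
  (fun k => is_deriveX 2 (lnaff _ _ _ (hp k))).
rewrite fct_sumE => H.
apply: (is_derive_eq H).
by apply: eq_bigr => k _; rewrite /= expr1.
Qed.
Definition gf (s : R) := Dfun (fun k => p k + s * c k).
Lemma derg t : (forall k, 0 < p k + t * c k) -> is_derive t 1 gf
  ((N%:R)^-1 * dQf t - (N%:R ^+ 2)^-1 * (2 * Sf t * dSf t) + 2 / N%:R * dSf t).
Proof.
move=> hp.
have H := is_deriveD (is_deriveB (is_deriveD (is_derive_cst (2 * ln (N%:R : R)) t 1)
   (is_deriveM (is_derive_cst ((N%:R : R)^-1) t 1) (derQ t hp)))
   (is_deriveM (is_derive_cst ((N%:R ^+ 2 : R)^-1) t 1) (is_deriveX 2 (derS t hp))))
   (is_deriveM (is_derive_cst (2 / (N%:R : R)) t 1) (derS t hp)).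
apply: (is_derive_eq H).
rewrite /= /cst !scaler0 !addr0 !expr1. rewrite /GRing.scale /=. ring.
Qed.
End S.
Section T.
Variable R : realType.
Definition cij {N : nat} (i j k : 'I_N) : R := (k == i)%:R - (k == j)%:R.
Lemma sum_c N (i j : 'I_N) (a : 'I_N -> R) : i != j ->
  \sum_(k < N) cij i j k * a k = a i - a j.
Proof.
move=> ij.
rewrite (bigD1 i) //= (bigD1 j) 1?eq_sym //= big1; last first.
  by move=> k /andP[ki kj]; rewrite /cij (negbTE ki) (negbTE kj) subrr mul0r.
by rewrite /cij eqxx (negbTE ij) eq_sym (negbTE ij) eqxx addr0 /= subr0 sub0r mul1r mulN1r.
Qed.
Lemma cvals N (i j k : 'I_N) : i != j ->
  (cij i j k = 1 /\ k = i) \/ (cij i j k = -1 /\ k = j) \/ cij i j k = 0.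
Proof.
move=> ij; rewrite /cij.
case: (eqVneq k i) => [->|ki]; first by left; rewrite (negbTE ij) subr0.
case: (eqVneq k j) => [->|kj]; first by right; left; rewrite sub0r.
by right; right; rewrite subrr.
Qed.
Lemma mindelta (e a b : R) : 0 < e -> 0 < a -> 0 < b ->
  exists d, [/\ 0 < d, d <= e, d <= a & d <= b].
Proof.
move=> e0 a0 b0; exists (Num.min e (Num.min a b)).
rewrite !lt_min e0 a0 b0 !ge_min !lexx /= !orbT; done.
Qed.
Lemma near_ok N (p : 'I_N -> R) (i j : 'I_N) (e d t : R) : i != j ->
  open_simplex p -> 0 < d -> d <= e -> d <= p i -> d <= p j -> -d < t < d ->
  (forall k, 0 < p k + t * cij i j k) /\
  open_simplex (fun k => p k + t * cij i j k) /\
  (forall k, `|(p k + t * cij i j k) - p k| < e).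
Proof.
move=> ij [pp sp] d0 de di dj /andP[t1 t2].
have pos : forall k, 0 < p k + t * cij i j k.
  move=> k; case: (cvals _ _ _ k ij) => [[-> ->]|[[-> ->]|->]].
  - lra.
  - lra.
  - by rewrite mulr0 addr0.
split => //; split; first split => //.
  rewrite big_split /= -mulr_sumr sp.
  have := sum_c _ _ _ (fun=> 1) ij; under eq_bigr do rewrite mulr1.
  by move=> ->; rewrite subrr mulr0 addr0.
move=> k; rewrite addrAC subrr add0r.
case: (cvals _ _ _ k ij) => [[-> _]|[[-> _]|->]].
- rewrite mulr1 ltr_norml; apply/andP; split; lra.
- rewrite mulrN1 normrN ltr_norml; apply/andP; split; lra.
- by rewrite mulr0 normr0; lra.
Qed.
Lemma foc N (hN : (0 < N)%N) (p : 'I_N -> R) (i j : 'I_N) : i != j ->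
  local_extremum_on (@open_simplex R N) (@Dfun R N) p ->
  (ln (p i) - (\sum_(k < N) ln (p k)) / N%:R + 1) / p i =
  (ln (p j) - (\sum_(k < N) ln (p k)) / N%:R + 1) / p j.
Proof.
move=> ij hext.
have Sp : open_simplex p by case: hext => -[].
have p0 : (fun k => p k + 0 * cij i j k) = p by apply: funext => k; rewrite mul0r addr0.
have pos0 : forall k, 0 < p k + 0 * cij i j k by move=> k; rewrite mul0r addr0; exact: Sp.1.
have D0 : is_derive (0:R) (1:R) (gf R N p (cij i j)) (0:R).
  case: hext => -[_ [e [e0 He]]]; have [d [d0 de di dj]] := mindelta _ _ _ e0 (Sp.1 i) (Sp.1 j).
  - apply: (@derive1_at_max _ _ (-d) d).
    + lra.
    + move=> t; rewrite in_itv /= => ht; have [pos _] := near_ok _ _ _ _ _ _ _ ij Sp d0 de di dj ht.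
      have H := derg R N p (cij i j) t pos; exact: ex_derive.
    + rewrite in_itv /=; apply/andP; split; lra.
    + move=> t; rewrite in_itv /= => ht; have [_ [hs hd]] := near_ok _ _ _ _ _ _ _ ij Sp d0 de di dj ht.
      by rewrite /gf p0; apply: He.
  - apply: (@derive1_at_min _ _ (-d) d).
    + lra.
    + move=> t; rewrite in_itv /= => ht; have [pos _] := near_ok _ _ _ _ _ _ _ ij Sp d0 de di dj ht.
      have H := derg R N p (cij i j) t pos; exact: ex_derive.
    + rewrite in_itv /=; apply/andP; split; lra.
    + move=> t; rewrite in_itv /= => ht; have [_ [hs hd]] := near_ok _ _ _ _ _ _ _ ij Sp d0 de di dj ht.
      by rewrite /gf p0; apply: He.
have E1 := @derive_val _ _ _ _ _ _ _ D0.
rewrite (@derive_val _ _ _ _ _ _ _ (derg R N p (cij i j) 0 pos0)) in E1.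
have eS : dSf R N p (cij i j) 0 = (p i)^-1 - (p j)^-1.
  rewrite /dSf -(sum_c _ _ _ (fun k => (p k)^-1) ij); apply: eq_bigr => k _.
  by rewrite mul0r addr0.
have eQ : dQf R N p (cij i j) 0 = 2 * ln (p i) / p i - 2 * ln (p j) / p j.
  rewrite /dQf -(sum_c _ _ _ (fun k => 2 * ln (p k) / p k) ij); apply: eq_bigr => k _.
  by rewrite mul0r addr0; ring.
have eSf : Sf R N p (cij i j) 0 = \sum_(k < N) ln (p k).
  by rewrite /Sf; apply: eq_bigr => k _; rewrite mul0r addr0.
rewrite eS eQ eSf in E1.
have N0 : (N%:R : R) != 0 by rewrite pnatr_eq0 -lt0n.
have pi0 : p i != 0 by rewrite gt_eqF // Sp.1.
have pj0 : p j != 0 by rewrite gt_eqF // Sp.1.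
apply/eqP; rewrite -subr_eq0; apply/eqP.
set S := \sum_(k < N) ln (p k).
rewrite -[RHS](mulr0 (N%:R / 2)) -E1.
rewrite -/S; have two0 : (2:R) != 0 by rewrite pnatr_eq0.
move: (p i) (p j) pi0 pj0 (N%:R : R) N0 two0 => x y x0 y0 n n0 t0.
by field; rewrite x0 y0 n0.
Qed.
Definition psi (c0 x : R) := (x + c0) * expR (- x).
Lemma psi_inc c0 u v : u < v -> v + c0 <= 1 -> psi c0 u < psi c0 v.
Proof.
move=> uv hv; rewrite /psi.
have -> : expR (- v) = expR (u - v) * expR (- u) by rewrite -expRD; congr expR; ring.
rewrite mulrA ltr_pM2r ?expR_gt0 //.
have E1 : 1 + (u - v) < expR (u - v) by apply: expR_gt1Dx; rewrite subr_eq0 lt_eqF.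
have E2 : expR (u - v) < 1 by rewrite expR_lt1 subr_lt0.
have E0 := expR_gt0 (u - v).
case: (lerP (v + c0) 0) => hy; nra.
Qed.
Lemma psi_dec c0 u v : u < v -> 1 <= u + c0 -> psi c0 v < psi c0 u.
Proof.
move=> uv hu; rewrite /psi.
have -> : expR (- u) = expR (v - u) * expR (- v) by rewrite -expRD; congr expR; ring.
rewrite mulrA ltr_pM2r ?expR_gt0 //.
have E1 : 1 + (v - u) < expR (v - u) by apply: expR_gt1Dx; rewrite subr_eq0 gt_eqF.
nra.
Qed.
Lemma straddle c0 u v : psi c0 u = psi c0 v -> u != v -> (u + c0 < 1) = ~~ (v + c0 < 1).
Proof.
wlog uv : u v / u < v.
  move=> H e; rewrite neq_lt => /orP[h|h]; first by apply: H => //; rewrite lt_eqF.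
  by rewrite (H v u h) ?negbK // lt_eqF.
move=> e _.
have hv : ~~ (v + c0 < 1).
  apply/negP => hv; have := psi_inc _ _ _ uv (ltW hv); rewrite e ltxx //.
have hu : u + c0 < 1.
  rewrite ltNge; apply/negP => hu; have := psi_dec _ _ _ uv hu; rewrite e ltxx //.
by rewrite hu hv.
Qed.
Lemma three c0 u v w : psi c0 u = psi c0 v -> psi c0 v = psi c0 w ->
  u != v -> v != w -> u != w -> False.
Proof.
move=> e1 e2 n1 n2 n3.
have h1 := straddle _ _ _ e1 n1; have h2 := straddle _ _ _ e2 n2.
have h3 := straddle _ _ _ (etrans e1 e2) n3.
move: h1 h2 h3; case: (u + c0 < 1); case: (v + c0 < 1); case: (w + c0 < 1) => //.
Qed.
End T.
Theorem mainTheorem2 (R : realType) (N : nat) (hN : (2 <= N)%N) (p : 'I_N -> R) :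
  local_extremum_on (@open_simplex R N) (@Dfun R N) p ->
  (forall k, p k = (N%:R)^-1) \/
  (exists a b : R, a <> b /\ (forall k, p k = a \/ p k = b) /\
     (exists i, p i = a) /\ (exists j, p j = b)).
Proof.
move=> hext.
have Sp : open_simplex p by case: hext => -[].
have hN0 : (0 < N)%N by apply: leq_trans hN.
pose i0 : 'I_N := Ordinal hN0.
set S := \sum_(k < N) ln (p k).
pose c0 := 1 - S / N%:R.
have phiE : forall k, psi R c0 (ln (p k)) = (ln (p k) - S / N%:R + 1) / p k.
  by move=> k; rewrite /psi expRN lnK ?posrE ?Sp.1 // /c0; ring.
have eqphi : forall a b, psi R c0 (ln (p a)) = psi R c0 (ln (p b)).
  move=> a b; case: (eqVneq a b) => [->//|ab]; rewrite !phiE.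
  exact: (@foc R N hN0 p a b ab hext).
have lninj : forall a b, p a != p b -> ln (p a) != ln (p b).
  move=> a b; apply: contra => /eqP h; apply/eqP.
  by apply: (ln_inj _ _ h); rewrite posrE Sp.1.
case: (boolP [exists k, p k != p i0]) => [/existsP [j hj] | ].
  right; exists (p i0), (p j); split; first by apply/eqP; rewrite eq_sym.
  split; last by split; [exists i0|exists j].
  move=> k; case: (eqVneq (p k) (p i0)) => [->|h1]; first by left.
  case: (eqVneq (p k) (p j)) => [->|h2]; first by right.
  exfalso; apply: (three _ _ _ _ _ (eqphi i0 j) (eqphi j k)).
  - by apply: lninj; rewrite eq_sym.
  - by apply: lninj; rewrite eq_sym.
  - by apply: lninj; rewrite eq_sym.
rewrite negb_exists => /forallP hall.
have hall' : forall k, p k = p i0 by move=> k; have := hall k; rewrite negbK => /eqP.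
left => k; rewrite hall'.
have N0 : (N%:R : R) != 0 by rewrite pnatr_eq0 -lt0n.
have h1 : p i0 * N%:R = 1.
  rewrite -[RHS]Sp.2 (eq_bigr (fun=> p i0)); last by move=> k' _; rewrite hall'.
  by rewrite sumr_const card_ord mulr_natr.
by apply: (mulIf N0); rewrite h1 mulVf.
Qed.
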